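(* Let $(X,(\cdot,\cdot|\cdot))$ be a 2-inner product space over $\mathbb{K}\in\{\mathbb{R},\mathbb{C}\}$, let $n$ be a positive integer, and let $x,y_1,\dots,y_n,z\in X$. Then \[ \sum_{i=1}^{n}\left|(x,y_i|z)\right|^2\le \|x|z\|^2\left\{\max_{1\le i\le n}\|y_i|z\|^2+\Big(\sum_{1\le i\ne j\le n}\left|(y_i,y_j|z)\right|^2\Big)^{1/2}\right\}. \]
   Context: A 2-inner product on a linear space $X$ of dimension greater than $1$ over $\mathbb{K}$ ($\mathbb{K}=\mathbb{R}$ or $\mathbb{C}$) is a function $(\cdot,\cdot|\cdot):X\times X\times X\to\mathbb{K}$ such that for all $x,x',y,z\in X$ and $\alpha\in\mathbb{K}$: (i) $(x,x|z)\ge 0$, and $(x,x|z)=0$ iff $x$ and $z$ are linearly dependent; (ii) $(x,x|z)=(z,z|x)$; (iii) $(y,x|z)=\overline{(x,y|z)}$; (iv) $(\alpha x,y|z)=\alpha(x,y|z)$; (v) $(x+x',y|z)=(x,y|z)+(x',y|z)$. The associated 2-norm is $\|x|z\|=\sqrt{(x,x|z)}$. The sum $\sum_{1\le i\ne j\le n}$ runs over all ordered pairs $(i,j)$ with $i,j\in\{1,\dots,n\}$, $i\ne j$. *)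

(* Defs.v *)
From mathcomp Require Import all_boot all_algebra.
From mathcomp Require Import reals.
From mathcomp Require Export complex.
Set Implicit Arguments. Unset Strict Implicit. Unset Printing Implicit Defensive.
Import GRing.Theory Num.Theory.
Local Open Scope ring_scope.

Definition lin_dep (K : nzRingType) (X : lmodType K) (x z : X) : Prop :=
  exists a b : K, (a != 0 \/ b != 0) /\ a *: x + b *: z = 0.

Definition is_2inner_product (K : numDomainType) (cj : K -> K)
    (X : lmodType K) (ip : X -> X -> X -> K) : Prop :=
  (exists u v : X, ~ lin_dep u v) /\
  [/\ (forall x z : X, 0 <= ip x x z /\ (ip x x z = 0 <-> lin_dep x z)),
      (forall x z : X, ip x x z = ip z z x),
      (forall x y z : X, ip y x z = cj (ip x y z)),
      (forall (a : K) (x y z : X), ip (a *: x) y z = a * ip x y z)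
    & (forall x x' y z : X, ip (x + x') y z = ip x y z + ip x' y z)].

Definition two_norm (K : numDomainType) (sqrtK : K -> K) (X : lmodType K)
    (ip : X -> X -> X -> K) (x z : X) : K := sqrtK (ip x x z).

Definition bessel_type_ineq (K : numDomainType) (sqrtK : K -> K)
    (X : lmodType K) (ip : X -> X -> X -> K) (n : nat)
    (x : X) (y : 'I_n -> X) (z : X) : Prop :=
  \sum_(i < n) `|ip x (y i) z| ^+ 2
  <= two_norm sqrtK ip x z ^+ 2 *
     (\big[Num.max/0]_(i < n) (two_norm sqrtK ip (y i) z ^+ 2)
      + sqrtK (\sum_(i < n) \sum_(j < n | i != j) `|ip (y i) (y j) z| ^+ 2)).

(* Main.v *)
Require Import Defs.
From mathcomp Require Import all_boot all_order all_algebra.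
From mathcomp Require Import reals complex ring.
Import Order.TTheory GRing.Theory Num.Theory.
Local Open Scope ring_scope.
Lemma amgm (K : numFieldType) (t u v : K) : 0 < t -> 0 <= u -> 0 <= v ->
  2 * (u * v) <= t * u ^+ 2 + t^-1 * v ^+ 2.
Proof.
move=> t0 u0 v0; rewrite -subr_ge0.
have -> : t * u ^+ 2 + t^-1 * v ^+ 2 - 2 * (u * v) = t^-1 * (t * u - v) ^+ 2.
  by field; rewrite gt_eqF.
apply: mulr_ge0; first by rewrite invr_ge0 ltW.
by rewrite -realEsqr rpredB // ?rpredM // ger0_real // ltW.
Qed.

Lemma final_step (K : numFieldType) (P S W B : K) : 0 <= P -> 0 < S -> 0 <= B ->
  W <= S * B -> (forall t, 0 <= t -> 2 * t * S <= P + t ^+ 2 * W) -> S <= P * B.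
Proof.
move=> P0 S0 B0 WB H.
have [B_eq0|Bpos] := eqVneq B 0.
  exfalso; move: WB; rewrite B_eq0 mulr0 => W0.
  have t0 : 0 <= (P + 1) / (2 * S) by rewrite divr_ge0 // ?addr_ge0 // mulr_ge0 // ltW.
  have := H _ t0.
  have -> : 2 * ((P + 1) / (2 * S)) * S = P + 1 by field; rewrite gt_eqF.
  move=> h; have : P + 1 <= P.
    apply: (le_trans h); rewrite gerDl; apply: mulr_ge0_le0 => //.
    by rewrite exprn_ge0.
  by rewrite gerDl ler10.
have Bgt0 : 0 < B by rewrite lt_def Bpos.
have t0 : 0 <= B^-1 by rewrite invr_ge0.
have := H _ t0.
have h2 : B^-1 ^+ 2 * W <= S / B.
  apply: le_trans (ler_wpM2l _ WB) _; first by rewrite exprn_ge0.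
  by rewrite le_eqVlt; apply/orP; left; apply/eqP; field; rewrite gt_eqF.
move=> h; have h3 : 2 * B^-1 * S <= P + S / B by apply: le_trans h _; rewrite lerD2l.
have h4 : S / B <= P.
  have e : 2 * B^-1 * S = S / B + S / B by field; rewrite gt_eqF.
  by move: h3; rewrite e [P + _]addrC lerD2l.
have -> : S = S / B * B by field; rewrite gt_eqF.
by rewrite ler_wpM2r // ltW.
Qed.

Lemma off_step (K : numFieldType) (O S q Q : K) : 0 <= O -> 0 < S -> 0 <= q -> q ^+ 2 = Q ->
  (forall t, 0 < t -> 2 * O <= t * S ^+ 2 + t^-1 * Q) -> O <= S * q.
Proof.
move=> O0 S0 q0 qQ H.
have [q_eq0|qpos] := eqVneq q 0.
  rewrite q_eq0 mulr0; move: qQ; rewrite q_eq0 expr0n /= => Q0.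
  have [->//|Opos] := eqVneq O 0.
  have Ogt0 : 0 < O by rewrite lt_def Opos.
  have t0 : 0 < O / S ^+ 2 by rewrite divr_gt0 // exprn_gt0.
  have := H _ t0; rewrite -Q0 mulr0 addr0.
  have -> : O / S ^+ 2 * S ^+ 2 = O by field; rewrite gt_eqF.
  have -> : 2 * O = O + O by rewrite mulrDl mul1r.
  by rewrite gerDl.
have qgt0 : 0 < q by rewrite lt_def qpos.
have t0 : 0 < q / S by rewrite divr_gt0.
have := H _ t0; rewrite -qQ.
have -> : q / S * S ^+ 2 + (q / S)^-1 * q ^+ 2 = 2 * (S * q).
  by field; rewrite !gt_eqF.
by rewrite ler_pM2l.
Qed.

Lemma bigmax_seq (K : numDomainType) (I : eqType) (r : seq I) (F : I -> K) :
  (forall i, 0 <= F i) ->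
  0 <= \big[Num.max/0]_(i <- r) F i /\ forall i, i \in r -> F i <= \big[Num.max/0]_(i <- r) F i.
Proof.
move=> hF; elim: r => [|a r [m0 mub]]; first by rewrite big_nil; split.
rewrite big_cons.
set m := \big[_/_]_(i <- r) _ in m0 mub *.
have cmp : (F a >=< m)%O by rewrite real_comparable ?ger0_real.
split; first by rewrite comparable_le_max // hF.
move=> i; rewrite in_cons comparable_le_max //; case/orP => [/eqP->|hi].
  by rewrite lexx.
by rewrite mub ?orbT.
Qed.

Lemma bigmax_ub (K : numDomainType) n (F : 'I_n -> K) : (forall i, 0 <= F i) ->
  0 <= \big[Num.max/0]_(i < n) F i /\ forall i, F i <= \big[Num.max/0]_(i < n) F i.
Proof.
move=> hF; have [h1 h2] := @bigmax_seq K _ (index_enum 'I_n) F hF.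
by split => // i; apply: h2; rewrite mem_index_enum.
Qed.

Section Gen.
Variables (K : numFieldType) (cj sqrtK : K -> K) (X : lmodType K) (ip : X -> X -> X -> K).
Hypotheses (cj0 : cj 0 = 0) (cjD : forall a b, cj (a + b) = cj a + cj b)
  (cjN : forall a, cj (- a) = - cj a)
  (cjM : forall a b, cj (a * b) = cj a * cj b) (cjn : forall a, a * cj a = `|a| ^+ 2)
  (cjr : forall a, 0 <= a -> cj a = a) (cjnorm : forall a, `|cj a| = `|a|)
  (sq0 : forall a, 0 <= a -> 0 <= sqrtK a) (sqK : forall a, 0 <= a -> sqrtK a ^+ 2 = a)
  (H : is_2inner_product cj ip).

Lemma gen n x (y : 'I_n -> X) z : bessel_type_ineq sqrtK ip x y z.
Proof.
case: H => _ [Hpos Hsw Hcj HZ HD].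
have pD1 u u' v : ip (u + u') v z = ip u v z + ip u' v z by apply: HD.
have pZ1 a u v : ip (a *: u) v z = a * ip u v z by apply: HZ.
have pC u v : ip v u z = cj (ip u v z) by apply: Hcj.
have p01 v : ip 0 v z = 0.
  have : ip (0 *: 0) v z = 0 by rewrite pZ1 mul0r.
  by rewrite scale0r.
have pD2 u v v' : ip u (v + v') z = ip u v z + ip u v' z by rewrite pC pD1 cjD -!pC.
have pZ2 a u v : ip u (a *: v) z = cj a * ip u v z by rewrite pC pZ1 cjM -pC.
have p02 u : ip u 0 z = 0 by rewrite pC p01 cj0.
have ps1 (I : Type) (r : seq I) (P : pred I) (F : I -> X) v :
    ip (\sum_(i <- r | P i) F i) v z = \sum_(i <- r | P i) ip (F i) v z.
  by rewrite (big_morph (fun u => ip u v z) (fun u u' => pD1 u u' v) (p01 v)).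
have ps2 (I : Type) (r : seq I) (P : pred I) (F : I -> X) u :
    ip u (\sum_(i <- r | P i) F i) z = \sum_(i <- r | P i) ip u (F i) z.
  by rewrite (big_morph (fun v => ip u v z) (fun v v' => pD2 u v v') (p02 u)).
have pge u : 0 <= ip u u z by case: (Hpos u z).
rewrite /bessel_type_ineq /two_norm sqK //.
set S := \sum_(i < n) `|ip x (y i) z| ^+ 2.
set M := \big[_/_]_(i < n) _.
set Q := \sum_(i < n) \sum_(j < n | i != j) _.
set q := sqrtK Q.
have S0 : 0 <= S by apply: sumr_ge0 => i _; apply: exprn_ge0.
have Q0 : 0 <= Q by apply: sumr_ge0 => i _; apply: sumr_ge0 => j _; apply: exprn_ge0.
have q0 : 0 <= q by apply: sq0.
have Fge i : 0 <= sqrtK (ip (y i) (y i) z) ^+ 2 by rewrite sqK.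
have [M0 Mub] := @bigmax_ub K n (fun i => sqrtK (ip (y i) (y i) z) ^+ 2) Fge.
rewrite -/M in M0 Mub.
have Mi i : ip (y i) (y i) z <= M by have := Mub i; rewrite sqK.
have P0 := pge x.
set w := \sum_(i < n) ip x (y i) z *: y i.
have hSw : ip x w z = S.
  by rewrite ps2; apply: eq_bigr => i _; rewrite pZ2 mulrC cjn.
have hwx : ip w x z = S by rewrite pC hSw cjr.
have hww : ip w w z = \sum_(i < n) \sum_(j < n)
    (ip x (y i) z * cj (ip x (y j) z)) * ip (y i) (y j) z.
  rewrite ps1; apply: eq_bigr => i _; rewrite pZ1 ps2 mulr_sumr.
  by apply: eq_bigr => j _; rewrite pZ2 mulrA.
set O := \sum_(i < n) \sum_(j < n | i != j)
    `|ip x (y i) z| * `|ip x (y j) z| * `|ip (y i) (y j) z|.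
have hW : ip w w z <= S * M + O.
  rewrite -(ger0_norm (pge w)) hww.
  apply: le_trans (ler_norm_sum _ _ _) _.
  apply: le_trans (ler_sum _ (fun i _ => ler_norm_sum _ _ _)) _.
  rewrite /S mulr_suml /O -big_split /=; apply: ler_sum => i _.
  rewrite (bigD1 i) //=; apply: lerD.
    rewrite cjn !normrM ger0_norm ?exprn_ge0 // ger0_norm //.
    by rewrite -expr2; apply: ler_wpM2l; rewrite ?exprn_ge0.
  rewrite le_eqVlt; apply/orP; left; apply/eqP.
  apply: eq_big => j; first by rewrite eq_sym.
  by move=> _; rewrite !normrM cjnorm.
have O0 : 0 <= O.
  by apply: sumr_ge0 => i _; apply: sumr_ge0 => j _; rewrite !mulr_ge0.
have [S_eq0|Sne0] := eqVneq S 0.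
  by rewrite S_eq0 mulr_ge0 // addr_ge0.
have Spos : 0 < S by rewrite lt_def Sne0.
have hO : O <= S * q.
  apply: (@off_step _ _ _ _ _ O0 Spos q0 (sqK _ Q0)) => t t0.
  have e1 : 2 * O = \sum_(i < n) \sum_(j < n | i != j)
      2 * ((`|ip x (y i) z| * `|ip x (y j) z|) * `|ip (y i) (y j) z|).
    by rewrite /O mulr_sumr; apply: eq_bigr => i _; rewrite mulr_sumr.
  rewrite e1.
  apply: le_trans (ler_sum _ (fun i _ => ler_sum _ (fun j _ =>
     @amgm _ _ _ _ t0 (mulr_ge0 (normr_ge0 _) (normr_ge0 _)) (normr_ge0 _)))) _.
  set U := \sum_(i < n) \sum_(j < n | i != j) (`|ip x (y i) z| * `|ip x (y j) z|) ^+ 2.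
  have e2 : \sum_(i < n) \sum_(j < n | i != j)
      (t * (`|ip x (y i) z| * `|ip x (y j) z|) ^+ 2 + t^-1 * `|ip (y i) (y j) z| ^+ 2)
      = t * U + t^-1 * Q.
    rewrite /U /Q mulr_sumr [t^-1 * _]mulr_sumr -big_split /=.
    by apply: eq_bigr => i _; rewrite !mulr_sumr -big_split.
  rewrite e2 lerD2r; apply: ler_wpM2l; first exact: ltW.
  rewrite /U /S expr2 mulr_suml; apply: ler_sum => i _.
  rewrite mulr_sumr [X in _ <= X](bigD1 i) //=; apply: ler_wpDl; first by rewrite !mulr_ge0 ?exprn_ge0.
  rewrite le_eqVlt; apply/orP; left; apply/eqP.
  apply: eq_big => j; first by rewrite eq_sym.
  by move=> _; rewrite exprMn.
apply: (@final_step _ _ _ (ip w w z) _ P0 Spos (addr_ge0 M0 q0)).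
  by apply: (le_trans hW); rewrite mulrDr lerD2l.
move=> t t0.
have := pge (x + (- t) *: w).
rewrite !pD1 !pD2 !pZ1 !pZ2 hSw hwx cjN cjr //.
set T := _ + _.
have -> : T = ip x x z + t ^+ 2 * ip w w z - 2 * t * S.
  rewrite /T; ring.
by rewrite subr_ge0.
Qed.
End Gen.

Theorem mainTheorem1 (R : realType) :
  (* K = R *)
  (forall (X : lmodType R) (ip : X -> X -> X -> R),
      is_2inner_product id ip ->
      forall (n : nat), (0 < n)%N ->
      forall (x : X) (y : 'I_n -> X) (z : X),
        bessel_type_ineq Num.sqrt ip x y z) /\
  (* K = C = R[i] *)
  (forall (X : lmodType R[i]) (ip : X -> X -> X -> R[i]),
      is_2inner_product Num.conj ip ->
      forall (n : nat), (0 < n)%N ->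
      forall (x : X) (y : 'I_n -> X) (z : X),
        bessel_type_ineq sqrtC ip x y z).
Proof.
split.
  move=> X ip H n _ x y z; apply: (@gen R id Num.sqrt X ip) => //.
  - by move=> a; rewrite real_normK ?num_real // expr2.
  - by move=> a _; apply: sqrtr_ge0.
  - by move=> a a0; rewrite sqr_sqrtr.
move=> X ip H n _ x y z; apply: (@gen _ Num.conj sqrtC X ip) => //.
- exact: rmorph0.
- by move=> a b; rewrite rmorphD.
- by move=> a; rewrite rmorphN.
- by move=> a b; rewrite rmorphM.
- by move=> a; rewrite normCK.
- by move=> a a0; rewrite conj_Creal // ger0_real.
- by move=> a; rewrite norm_conjC.
- by move=> a a0; rewrite sqrtC_ge0.
- by move=> a a0; rewrite sqrtCK.
Qed.
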